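(* Let $\|\cdot\|$ be a URTC-norm on $\mathbb{R}^2$, and let $\phi\colon\mathbb{R}^2\to\mathbb{R}^2$ be an arbitrary map such that for all $x,y\in\mathbb{R}^2$, $\|x-y\|=1$ implies $\|\phi(x)-\phi(y)\|=1$. Then $\phi$ is an affine isometry (with respect to $\|\cdot\|$).
   Context: A norm $\|\cdot\|$ on $\mathbb{R}^2$ is called a URTC-norm (unique regular triangle constructibility) if for every $a,b\in\mathbb{R}^2$ with $\|a-b\|=1$ the system $\|a-x\|=1$, $\|b-x\|=1$ is satisfied by exactly two points $x\in\mathbb{R}^2$. *)

(* Defs.v *)
From Stdlib Require Import Reals.
Open Scope R_scope.

Definition pt := (R * R)%type.

Definition vsub (x y : pt) : pt := (fst x - fst y, snd x - snd y).
Definition vadd (x y : pt) : pt := (fst x + fst y, snd x + snd y).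
Definition vscale (c : R) (x : pt) : pt := (c * fst x, c * snd x).

Definition is_norm (N : pt -> R) : Prop :=
  (forall v, 0 <= N v) /\
  (forall v, N v = 0 -> v = (0, 0)) /\
  (forall c v, N (vscale c v) = Rabs c * N v) /\
  (forall u v, N (vadd u v) <= N u + N v).

Definition URTC (N : pt -> R) : Prop :=
  forall a b : pt, N (vsub a b) = 1 ->
    exists x1 x2 : pt, x1 <> x2 /\
      forall x, (N (vsub a x) = 1 /\ N (vsub b x) = 1) <-> (x = x1 \/ x = x2).

Definition lin_app (m11 m12 m21 m22 : R) (v : pt) : pt :=
  (m11 * fst v + m12 * snd v, m21 * fst v + m22 * snd v).

Definition affine_isometry (N : pt -> R) (f : pt -> pt) : Prop :=
  (exists m11 m12 m21 m22 : R, exists t : pt,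
      forall x, f x = vadd (lin_app m11 m12 m21 m22 x) t) /\
  (forall x y, N (vsub (f x) (f y)) = N (vsub x y)).

(* Main.v *)
Require Import Defs.
From Stdlib Require Import Reals Lra Psatz Classical ZArith.
Open Scope R_scope.

Ltac veq := apply injective_projections; unfold vsub, vadd, vscale, lin_app; simpl; field.
Ltac veqr := apply injective_projections; unfold vsub, vadd, vscale, lin_app; simpl; ring.

Lemma N_ext (N : pt -> R) x y : x = y -> N x = N y.
Proof. intros ->; reflexivity. Qed.

Section Basics.
Lemma N_ge0 N : is_norm N -> forall v, 0 <= N v.
Proof. intros [H _]; exact H. Qed.
Lemma N_def N : is_norm N -> forall v, N v = 0 -> v = (0,0).
Proof. intros [_ [H _]]; exact H. Qed.
Lemma N_scale N : is_norm N -> forall c v, N (vscale c v) = Rabs c * N v.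
Proof. intros [_ [_ [H _]]]; exact H. Qed.
Lemma N_tri N : is_norm N -> forall u v, N (vadd u v) <= N u + N v.
Proof. intros [_ [_ [_ H]]]; exact H. Qed.

Lemma N_zero N : is_norm N -> N (0,0) = 0.
Proof. intros H. rewrite (N_ext N (0,0) (vscale 0 (0,0))) by veqr.
  rewrite N_scale by auto. rewrite Rabs_R0; ring. Qed.

Lemma N_opp N : is_norm N -> forall v, N (vscale (-1) v) = N v.
Proof. intros H v. rewrite N_scale by auto. rewrite Rabs_left by lra; ring. Qed.

Lemma N_sym N : is_norm N -> forall a b, N (vsub a b) = N (vsub b a).
Proof. intros H a b. rewrite <- (N_opp N H (vsub b a)). apply N_ext. veqr. Qed.

Lemma N_tri3 N : is_norm N -> forall a b c, N (vsub a c) <= N (vsub a b) + N (vsub b c).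
Proof. intros H a b c. rewrite (N_ext N (vsub a c) (vadd (vsub a b) (vsub b c))) by veqr.
  apply N_tri; auto. Qed.

Lemma N_rev N : is_norm N -> forall a b, N a - N b <= N (vsub a b).
Proof. intros H a b. pose proof (N_tri N H (vsub a b) b).
  rewrite (N_ext N (vadd (vsub a b) b) a) in H0 by veqr. lra. Qed.

Lemma N_abs N : is_norm N -> forall a b, Rabs (N a - N b) <= N (vsub a b).
Proof. intros H a b. pose proof (N_rev N H a b). pose proof (N_rev N H b a).
  rewrite N_sym in H1 by auto. unfold Rabs; destruct Rcase_abs; lra. Qed.

Lemma N_bound N : is_norm N -> forall a, N a <= Rabs (fst a) * N (1,0) + Rabs (snd a) * N (0,1).
Proof. intros H a. rewrite <- !N_scale by auto.
  rewrite (N_ext N a (vadd (vscale (fst a) (1,0)) (vscale (snd a) (0,1)))) at 1 by veqr.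
  apply N_tri; auto. Qed.

Lemma vsub_zero N : is_norm N -> forall a b, N (vsub a b) = 0 -> a = b.
Proof. intros H a b E. apply N_def in E; auto. unfold vsub in E. inversion E.
  apply injective_projections; lra. Qed.
End Basics.

Definition apex (N : pt -> R) a b x := N (vsub a x) = 1 /\ N (vsub b x) = 1.

Lemma apex_two N : URTC N -> forall a b x y z, N (vsub a b) = 1 ->
  apex N a b x -> apex N a b y -> x <> y -> apex N a b z -> z = x \/ z = y.
Proof.
  intros U a b x y z Hab Hx Hy Hxy Hz.
  destruct (U a b Hab) as [x1 [x2 [Hd Hs]]].
  apply Hs in Hx. apply Hs in Hy. apply Hs in Hz.
  destruct Hx as [->| ->]; destruct Hy as [->| ->]; destruct Hz as [->| ->]; tauto.
Qed.

Lemma N_unit_diag N : is_norm N -> URTC N -> forall u v,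
  N u = 1 -> N v = 1 -> N (vsub u v) = 1 -> N (vadd u v) <> 1.
Proof.
  intros H U u v Hu Hv Huv Hs.
  assert (Hab : N (vsub (0,0) u) = 1) by (rewrite N_sym by auto; rewrite <- Hu; apply N_ext; veqr).
  assert (A1 : apex N (0,0) u v).
  { split. rewrite N_sym by auto. rewrite <- Hv; apply N_ext; veqr. auto. }
  assert (A2 : apex N (0,0) u (vsub u v)).
  { split. rewrite N_sym by auto. rewrite <- Huv; apply N_ext; veqr. rewrite <- Hv; apply N_ext; veqr. }
  assert (A3 : apex N (0,0) u (vadd u v)).
  { split. rewrite N_sym by auto. rewrite <- Hs; apply N_ext; veqr.
    rewrite <- Hv. rewrite <- (N_opp N H v). apply N_ext; veqr. }
  assert (D12 : v <> vsub u v).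
  { intro E. assert (u = vscale 2 v).
    { pose proof (f_equal fst E); pose proof (f_equal snd E).
      unfold vsub, vscale in *; simpl in *. apply injective_projections; simpl; lra. }
    rewrite H0, N_scale, Hv in Hu by auto. rewrite Rabs_right in Hu; lra. }
  destruct (apex_two N U _ _ _ _ _ Hab A1 A2 D12 A3) as [E|E].
  - assert (u = (0,0)) by (pose proof (f_equal fst E); pose proof (f_equal snd E);
      unfold vsub, vadd in *; simpl in *; apply injective_projections; simpl; lra).
    rewrite H0, N_zero in Hu by auto. lra.
  - assert (v = (0,0)) by (pose proof (f_equal fst E); pose proof (f_equal snd E);
      unfold vsub, vadd in *; simpl in *; apply injective_projections; simpl; lra).
    rewrite H0, N_zero in Hv by auto. lra.
Qed.

Lemma rhombus_image N phi : is_norm N -> URTC N ->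
  (forall x y : pt, N (vsub x y) = 1 -> N (vsub (phi x) (phi y)) = 1) ->
  forall x e e', N e = 1 -> N e' = 1 -> N (vsub e e') = 1 ->
  phi (vadd x (vadd e e')) = phi x \/
  phi (vadd x (vadd e e')) = vsub (vadd (phi (vadd x e)) (phi (vadd x e'))) (phi x).
Proof.
  intros H U Hphi x e e' He He' Hee.
  set (A := phi (vadd x e)). set (B := phi (vadd x e')). set (P := phi x).
  set (Z := phi (vadd x (vadd e e'))).
  assert (HAB : N (vsub A B) = 1).
  { apply Hphi. rewrite <- Hee; apply N_ext; veqr. }
  assert (HAP : N (vsub A P) = 1). { apply Hphi. rewrite <- He; apply N_ext; veqr. }
  assert (HBP : N (vsub B P) = 1). { apply Hphi. rewrite <- He'; apply N_ext; veqr. }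
  assert (HAZ : N (vsub A Z) = 1).
  { apply Hphi. rewrite <- He', <- (N_opp N H e'); apply N_ext; veqr. }
  assert (HBZ : N (vsub B Z) = 1).
  { apply Hphi. rewrite <- He, <- (N_opp N H e); apply N_ext; veqr. }
  assert (AP : apex N A B P) by (split; auto).
  assert (AQ : apex N A B (vsub (vadd A B) P)).
  { split. rewrite <- HBP, N_sym by auto; apply N_ext; veqr.
    rewrite <- HAP, N_sym by auto; apply N_ext; veqr. }
  assert (AZ : apex N A B Z) by (split; auto).
  assert (D : P <> vsub (vadd A B) P).
  { intro E. assert (vsub A B = vscale 2 (vsub A P)).
    { pose proof (f_equal fst E); pose proof (f_equal snd E).
      unfold vsub, vadd, vscale in *; simpl in *. apply injective_projections; simpl; lra. }
    rewrite H0, N_scale, HAP in HAB by auto. rewrite Rabs_right in HAB; lra. }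
  destruct (apex_two N U _ _ _ _ _ HAB AP AQ D AZ); auto.
Qed.

Lemma cpt_eps f t : continuity_pt f t <-> forall eps, eps>0 -> exists d, d>0 /\ forall s, Rabs (s - t) < d -> Rabs (f s - f t) < eps.
Proof.
  unfold continuity_pt, continue_in, limit1_in, limit_in, D_x, no_cond; simpl; unfold R_dist.
  split.
  - intros H eps He. destruct (H eps He) as [d [Hd Hs]]. exists d; split; auto.
    intros s Hs'. destruct (Req_dec s t) as [->|Hne].
    + unfold Rminus; rewrite Rplus_opp_r, Rabs_R0; lra.
    + apply Hs; auto.
  - intros H eps He. destruct (H eps He) as [d [Hd Hs]]. exists d; split; auto.
    intros s [_ Hs']. auto.
Qed.

Definition ccont (F : R -> pt) := forall t,
  continuity_pt (fun s => fst (F s)) t /\ continuity_pt (fun s => snd (F s)) t.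

Lemma ccont_N N F : is_norm N -> ccont F -> continuity (fun s => N (F s)).
Proof.
  intros H C t. destruct (C t) as [C1 C2]. rewrite cpt_eps in *.
  intros eps He.
  set (K := N (1,0) + N (0,1) + 1).
  assert (HK : K > 0) by (unfold K; pose proof (N_ge0 N H (1,0)); pose proof (N_ge0 N H (0,1)); lra).
  destruct (C1 (eps / K)) as [d1 [Hd1 H1]]. apply Rdiv_lt_0_compat; lra.
  destruct (C2 (eps / K)) as [d2 [Hd2 H2]]. apply Rdiv_lt_0_compat; lra.
  exists (Rmin d1 d2). split. apply Rmin_pos; auto.
  intros s Hs. pose proof (Rmin_l d1 d2). pose proof (Rmin_r d1 d2).
  specialize (H1 s ltac:(lra)). specialize (H2 s ltac:(lra)).
  eapply Rle_lt_trans. apply N_abs; auto.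
  eapply Rle_lt_trans. apply N_bound; auto. unfold vsub; simpl.
  pose proof (N_ge0 N H (1,0)); pose proof (N_ge0 N H (0,1)).
  assert (Hk : eps / K * K = eps) by (field; lra).
  assert (Rabs (fst (F s) - fst (F t)) * N (1, 0) <= eps / K * N (1,0)).
  { apply Rmult_le_compat_r; lra. }
  assert (Rabs (snd (F s) - snd (F t)) * N (0, 1) <= eps / K * N (0,1)).
  { apply Rmult_le_compat_r; lra. }
  assert (eps / K > 0) by (apply Rdiv_lt_0_compat; lra).
  assert (eps / K * N (1,0) + eps / K * N (0,1) + eps / K = eps) by (unfold K in *; field; lra).
  lra.
Qed.

Lemma ccont_add F G : ccont F -> ccont G -> ccont (fun s => vadd (F s) (G s)).
Proof. intros CF CG t. destruct (CF t), (CG t). unfold vadd; simpl.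
  split; apply continuity_pt_plus; auto. Qed.
Lemma ccont_sub F G : ccont F -> ccont G -> ccont (fun s => vsub (F s) (G s)).
Proof. intros CF CG t. destruct (CF t), (CG t). unfold vsub; simpl.
  split; apply continuity_pt_minus; auto. Qed.
Lemma ccont_scale c F : ccont F -> ccont (fun s => vscale c (F s)).
Proof. intros CF t. destruct (CF t). unfold vscale; simpl.
  split; apply continuity_pt_scal; auto. Qed.
Lemma ccont_const p : ccont (fun _ => p).
Proof. intros t; split; apply continuity_pt_const; intros ? ?; auto. Qed.
Lemma ccont_comp F h : ccont F -> continuity h -> ccont (fun s => F (h s)).
Proof. intros CF Ch t. destruct (CF (h t)). split.
  - apply (continuity_pt_comp h (fun s => fst (F s))); auto.
  - apply (continuity_pt_comp h (fun s => snd (F s))); auto. Qed.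

Definition rot (u : pt) (t : R) : pt :=
  (cos t * fst u - sin t * snd u, sin t * fst u + cos t * snd u).
Definition pth (N : pt -> R) (u : pt) (t : R) : pt := vscale (/ N (rot u t)) (rot u t).

Lemma rot_nz u t : u <> (0,0) -> rot u t <> (0,0).
Proof. intros Hu E. apply Hu. pose proof (f_equal fst E); pose proof (f_equal snd E).
  unfold rot in *; simpl in *. pose proof (sin2_cos2 t). unfold Rsqr in *.
  assert (fst u = 0) by nra. assert (snd u = 0) by nra.
  apply injective_projections; simpl; auto. Qed.

Lemma unit_nz N u : is_norm N -> N u = 1 -> u <> (0,0).
Proof. intros H Hu E. rewrite E, N_zero in Hu by auto. lra. Qed.

Lemma N_rot_pos N u t : is_norm N -> u <> (0,0) -> N (rot u t) > 0.
Proof. intros H Hu. pose proof (N_ge0 N H (rot u t)).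
  destruct (Req_dec (N (rot u t)) 0) as [E|E]; [|lra].
  apply N_def in E; auto. exfalso; apply (rot_nz u t Hu E). Qed.

Lemma N_pth N u t : is_norm N -> u <> (0,0) -> N (pth N u t) = 1.
Proof. intros H Hu. unfold pth. rewrite N_scale by auto. pose proof (N_rot_pos N u t H Hu).
  rewrite Rabs_right. field; lra. left; apply Rinv_0_lt_compat; lra. Qed.

Lemma rot0 u : rot u 0 = u.
Proof. unfold rot. rewrite cos_0, sin_0. apply injective_projections; simpl; ring. Qed.

Lemma pth0 N u : is_norm N -> N u = 1 -> pth N u 0 = u.
Proof. intros H Hu. unfold pth. rewrite rot0, Hu. veq. Qed.

Lemma rot_PI u t : rot u (t + PI) = vscale (-1) (rot u t).
Proof. unfold rot. rewrite cos_plus, sin_plus, cos_PI, sin_PI. veqr. Qed.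

Lemma pth_PI N u t : is_norm N -> u <> (0,0) -> pth N u (t + PI) = vscale (-1) (pth N u t).
Proof. intros H Hu. unfold pth. rewrite rot_PI, N_opp by auto.
  pose proof (N_rot_pos N u t H Hu). veq; lra. Qed.

Lemma pth_2PI N u t : is_norm N -> u <> (0,0) -> pth N u (t + 2 * PI) = pth N u t.
Proof. intros H Hu. replace (t + 2 * PI) with (t + PI + PI) by ring.
  rewrite !pth_PI by auto. veqr. Qed.

Lemma rot_add u a b : rot u (a + b) = rot (rot u a) b.
Proof. unfold rot. rewrite cos_plus, sin_plus. veqr. Qed.

Lemma cos_1_not d : 0 < d < 2 * PI -> cos d <> 1.
Proof. intros Hd E. pose proof (sin2_cos2 d). rewrite E in H. unfold Rsqr in H.
  assert (sin d = 0) by nra. destruct (sin_eq_0_0 d H0) as [k Hk].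
  pose proof PI_RGT_0.
  assert (0 < IZR k < 2) by (split; nra).
  destruct H2 as [H2 H3]. apply lt_0_IZR in H2. apply lt_IZR in H3.
  assert (k = 1%Z) by lia. subst k. rewrite Hk in E. simpl in E. rewrite Rmult_1_l, cos_PI in E. lra.
Qed.

Lemma pth_inj N u t1 t2 : is_norm N -> u <> (0,0) -> 0 < t2 - t1 < 2 * PI -> pth N u t1 <> pth N u t2.
Proof.
  intros H Hu Ht E. set (d := t2 - t1).
  pose proof (N_rot_pos N u t1 H Hu) as P1. pose proof (N_rot_pos N u t2 H Hu) as P2.
  assert (R2 : rot u t2 = rot (rot u t1) d) by (rewrite <- rot_add; f_equal; unfold d; ring).
  unfold pth in E. rewrite R2 in E, P2.
  assert (Hw : rot u t1 <> (0,0)) by (apply rot_nz; auto).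
  revert E P1 P2 Hw. generalize (rot u t1) as w. intros w E P1 P2 Hw.
  revert E P1 P2. generalize (N w) as n1. generalize (N (rot w d)) as n2. intros n2 n1 E P1 P2.
  pose proof (f_equal fst E); pose proof (f_equal snd E).
  unfold vscale, rot in H0, H1; simpl in H0, H1.
  set (c := cos d) in *. set (s := sin d) in *.
  assert (Hcs : s * s + c * c = 1) by (pose proof (sin2_cos2 d); unfold Rsqr in *; auto).
  set (w1 := fst w) in *. set (w2 := snd w) in *.
  set (k := n2 * / n1).
  assert (Hk : k > 0) by (unfold k; apply Rmult_lt_0_compat; [lra|apply Rinv_0_lt_compat; lra]).
  assert (E1 : c * w1 - s * w2 = k * w1).
  { apply (Rmult_eq_reg_l (/ n2)); [|apply Rinv_neq_0_compat; lra].
    rewrite <- H0. unfold k; field; lra. }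
  assert (E2 : s * w1 + c * w2 = k * w2).
  { apply (Rmult_eq_reg_l (/ n2)); [|apply Rinv_neq_0_compat; lra].
    rewrite <- H1. unfold k; field; lra. }
  assert (Wpos : w1 * w1 + w2 * w2 > 0).
  { destruct (Req_dec w1 0); destruct (Req_dec w2 0); try nra.
    exfalso; apply Hw; apply injective_projections; simpl; auto. }
  assert (L : (k * k - 1) * (w1 * w1 + w2 * w2) = 0).
  { replace ((k*k-1)*(w1*w1+w2*w2)) with ((k*w1)*(k*w1) + (k*w2)*(k*w2) - (w1*w1+w2*w2)) by ring.
    rewrite <- E1, <- E2.
    replace ((c * w1 - s * w2) * (c * w1 - s * w2) + (s * w1 + c * w2) * (s * w1 + c * w2) - (w1 * w1 + w2 * w2)) with ((s*s+c*c - 1)*(w1*w1+w2*w2)) by ring.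
    rewrite Hcs; ring. }
  assert (k = 1).
  { apply Rmult_integral in L. destruct L; [|lra]. nra. }
  rewrite H2 in E1, E2.
  assert (((c-1)*(c-1) + s*s) * w1 = 0).
  { replace (((c-1)*(c-1) + s*s) * w1) with ((c-1)*(c*w1 - s*w2 - w1) + s*(s*w1+c*w2 - w2)) by ring.
    rewrite E1, E2; ring. }
  assert (((c-1)*(c-1) + s*s) * w2 = 0).
  { replace (((c-1)*(c-1) + s*s) * w2) with (-s*(c*w1 - s*w2 - w1) + (c-1)*(s*w1+c*w2 - w2)) by ring.
    rewrite E1, E2; ring. }
  assert ((c-1)*(c-1) + s*s = 0).
  { destruct (Req_dec w1 0); [|apply Rmult_integral in H3; destruct H3; lra].
    destruct (Req_dec w2 0); [nra|apply Rmult_integral in H4; destruct H4; lra]. }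
  assert (c = 1) by nra.
  apply (cos_1_not d); auto.
Qed.

Lemma ccont_rot u : ccont (rot u).
Proof.
  intros t; unfold rot; simpl; split;
  repeat first [apply continuity_pt_minus | apply continuity_pt_plus | apply continuity_pt_mult
     | apply continuity_cos | apply continuity_sin | (apply continuity_pt_const; intros ? ?; reflexivity)].
Qed.

Lemma ccont_pth N u : is_norm N -> u <> (0,0) -> ccont (pth N u).
Proof.
  intros H Hu t. pose proof (ccont_N N _ H (ccont_rot u) t) as CN.
  destruct (ccont_rot u t) as [C1 C2].
  pose proof (N_rot_pos N u t H Hu).
  unfold pth, vscale; simpl; split; apply continuity_pt_mult; auto;
  apply (continuity_pt_inv (fun s => N (rot u s))); auto; lra.
Qed.

Definition gg N u a t := N (vsub (pth N u a) (pth N u t)) - 1.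

Lemma gg_cont_t N u a : is_norm N -> u <> (0,0) -> continuity (fun t => gg N u a t).
Proof. intros H Hu t. unfold gg. apply continuity_pt_minus.
  apply (ccont_N N (fun t => vsub (pth N u a) (pth N u t)) H); auto.
  apply ccont_sub. apply ccont_const. apply ccont_pth; auto.
  apply continuity_pt_const; intros ? ?; auto. Qed.

Lemma gg_cont_a N u t : is_norm N -> u <> (0,0) -> continuity (fun a => gg N u a t).
Proof. intros H Hu a. unfold gg. apply continuity_pt_minus.
  apply (ccont_N N (fun a => vsub (pth N u a) (pth N u t)) H); auto.
  apply ccont_sub. apply ccont_pth; auto. apply ccont_const.
  apply continuity_pt_const; intros ? ?; auto. Qed.

Lemma gg_same N u a : is_norm N -> gg N u a a = -1.
Proof. intros H. unfold gg. rewrite (N_ext N _ (0,0)) by veqr. rewrite N_zero by auto. ring. Qed.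

Lemma gg_PI N u a : is_norm N -> u <> (0,0) -> gg N u a (a + PI) = 1.
Proof. intros H Hu. unfold gg. rewrite pth_PI by auto.
  rewrite (N_ext N _ (vscale 2 (pth N u a))) by veqr.
  rewrite N_scale, N_pth by auto. rewrite Rabs_right by lra. ring. Qed.

Lemma gg_2PI N u a : is_norm N -> u <> (0,0) -> gg N u a (a + 2 * PI) = -1.
Proof. intros H Hu. unfold gg. rewrite pth_2PI by auto. fold (gg N u a a). apply gg_same; auto. Qed.

Lemma gg_apex N u a t : is_norm N -> u <> (0,0) -> gg N u a t = 0 ->
  apex N (0,0) (pth N u a) (pth N u t).
Proof. intros H Hu E. unfold gg in E. split.
  rewrite N_sym by auto. rewrite (N_ext N _ (pth N u t)) by veqr. apply N_pth; auto.
  lra. Qed.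

Lemma gg_uniq N u a t1 t2 : is_norm N -> URTC N -> u <> (0,0) ->
  a < t1 < a + PI -> a < t2 < a + PI -> gg N u a t1 = 0 -> gg N u a t2 = 0 -> t1 = t2.
Proof.
  intros H U Hu I1 I2 Z1 Z2.
  assert (PIpos := PI_RGT_0).
  assert (key : forall s1 s2, a < s1 < a + PI -> a < s2 < a + PI -> gg N u a s1 = 0 ->
     gg N u a s2 = 0 -> s1 < s2 -> False).
  { intros s1 s2 J1 J2 Y1 Y2 Lt.
    destruct (IVT (fun t => - gg N u a t) (a + PI) (a + 2 * PI)) as [s3 [J3 Y3]].
    - intro t. apply continuity_pt_opp. apply gg_cont_t; auto.
    - lra.
    - rewrite gg_PI by auto. lra.
    - rewrite gg_2PI by auto. lra.
    - assert (Y3' : gg N u a s3 = 0) by lra.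
      assert (s3 <> a + PI) by (intro E; subst s3; rewrite gg_PI in Y3' by auto; lra).
      assert (s3 <> a + 2*PI) by (intro E; rewrite E, gg_2PI in Y3' by auto; lra).
      assert (Hab : N (vsub (0,0) (pth N u a)) = 1).
      { rewrite N_sym by auto. rewrite (N_ext N _ (pth N u a)) by veqr. apply N_pth; auto. }
      destruct (apex_two N U _ _ (pth N u s1) (pth N u s2) (pth N u s3) Hab) as [E|E].
      + apply gg_apex; auto.
      + apply gg_apex; auto.
      + apply pth_inj; auto; lra.
      + apply gg_apex; auto.
      + apply (pth_inj N u s1 s3); auto; lra.
      + apply (pth_inj N u s2 s3); auto; lra. }
  destruct (Rtotal_order t1 t2) as [L|[L|L]]; auto.
  - exfalso; apply (key t1 t2); auto.
  - exfalso; apply (key t2 t1); auto.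
Qed.

Lemma gg_zero N u a : is_norm N -> u <> (0,0) -> {t | a < t < a + PI /\ gg N u a t = 0}.
Proof.
  intros H Hu. assert (PIpos := PI_RGT_0).
  destruct (IVT (fun t => gg N u a t) a (a + PI)) as [z [J Y]].
  - apply gg_cont_t; auto.
  - lra.
  - rewrite gg_same by auto; lra.
  - rewrite gg_PI by auto; lra.
  - exists z. split; auto.
    assert (z <> a) by (intro E; subst; rewrite gg_same in Y by auto; lra).
    assert (z <> a + PI) by (intro E; rewrite E, gg_PI in Y by auto; lra).
    lra.
Qed.

Lemma gg_sign_lt N u a z t : is_norm N -> URTC N -> u <> (0,0) ->
  a < z < a + PI -> gg N u a z = 0 -> a <= t < z -> gg N u a t < 0.
Proof.
  intros H U Hu Jz Yz Jt.
  destruct (Rlt_le_dec (gg N u a t) 0) as [L|L]; auto. exfalso.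
  destruct (Req_dec t a) as [E|E].
  { subst. rewrite gg_same in L by auto. lra. }
  destruct (Req_dec (gg N u a t) 0) as [E0|E0].
  { assert (t = z) by (apply (gg_uniq N u a); auto; lra). lra. }
  destruct (IVT (fun s => gg N u a s) a t) as [w [Jw Yw]].
  - apply gg_cont_t; auto.
  - lra.
  - rewrite gg_same by auto; lra.
  - lra.
  - assert (w <> a) by (intro Ew; subst; rewrite gg_same in Yw by auto; lra).
    assert (w = z) by (apply (gg_uniq N u a); auto; lra). lra.
Qed.

Lemma gg_sign_gt N u a z t : is_norm N -> URTC N -> u <> (0,0) ->
  a < z < a + PI -> gg N u a z = 0 -> z < t <= a + PI -> gg N u a t > 0.
Proof.
  intros H U Hu Jz Yz Jt.
  destruct (Rlt_le_dec 0 (gg N u a t)) as [L|L]; auto. exfalso.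
  destruct (Req_dec t (a + PI)) as [E|E].
  { rewrite E, gg_PI in L by auto. lra. }
  destruct (Req_dec (gg N u a t) 0) as [E0|E0].
  { assert (t = z) by (apply (gg_uniq N u a); auto; lra). lra. }
  destruct (IVT (fun s => gg N u a s) t (a + PI)) as [w [Jw Yw]].
  - apply gg_cont_t; auto.
  - lra.
  - lra.
  - rewrite gg_PI by auto; lra.
  - assert (w <> a + PI) by (intro Ew; rewrite Ew, gg_PI in Yw by auto; lra).
    assert (w = z) by (apply (gg_uniq N u a); auto; lra). lra.
Qed.

Lemma apex_fun N u : is_norm N -> URTC N -> u <> (0,0) ->
  exists f : R -> R, (forall a, a < f a < a + PI /\ gg N u a (f a) = 0) /\ continuity f.
Proof.
  intros H U Hu. assert (PIpos := PI_RGT_0).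
  exists (fun a => proj1_sig (gg_zero N u a H Hu)).
  set (f := fun a => proj1_sig (gg_zero N u a H Hu)).
  assert (Sf : forall a, a < f a < a + PI /\ gg N u a (f a) = 0).
  { intro a. unfold f. destruct (gg_zero N u a H Hu); simpl; auto. }
  split; auto.
  intro a0. apply cpt_eps. intros eps He.
  destruct (Sf a0) as [J0 Y0].
  set (e := Rmin (eps / 2) (Rmin ((f a0 - a0) / 2) ((a0 + PI - f a0) / 2))).
  assert (e > 0) by (unfold e; repeat apply Rmin_pos; lra).
  assert (e <= eps / 2) by apply Rmin_l.
  assert (e <= (f a0 - a0) / 2) by (unfold e; eapply Rle_trans; [apply Rmin_r|apply Rmin_l]).
  assert (e <= (a0 + PI - f a0) / 2) by (unfold e; eapply Rle_trans; [apply Rmin_r|apply Rmin_r]).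
  assert (Gm : gg N u a0 (f a0 - e) < 0) by (apply (gg_sign_lt N u a0 (f a0)); auto; lra).
  assert (Gp : gg N u a0 (f a0 + e) > 0) by (apply (gg_sign_gt N u a0 (f a0)); auto; lra).
  pose proof (gg_cont_a N u (f a0 - e) H Hu a0) as C1. rewrite cpt_eps in C1.
  pose proof (gg_cont_a N u (f a0 + e) H Hu a0) as C2. rewrite cpt_eps in C2.
  destruct (C1 (- gg N u a0 (f a0 - e))) as [d1 [Hd1 K1]]; [lra|].
  destruct (C2 (gg N u a0 (f a0 + e))) as [d2 [Hd2 K2]]; [lra|].
  exists (Rmin e (Rmin d1 d2)). split. repeat apply Rmin_pos; lra.
  intros a Ha.
  assert (Ha1 : Rabs (a - a0) < e) by (eapply Rlt_le_trans; [apply Ha|apply Rmin_l]).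
  assert (Ha2 : Rabs (a - a0) < d1) by (eapply Rlt_le_trans; [apply Ha|]; eapply Rle_trans; [apply Rmin_r|apply Rmin_l]).
  assert (Ha3 : Rabs (a - a0) < d2) by (eapply Rlt_le_trans; [apply Ha|]; eapply Rle_trans; [apply Rmin_r|apply Rmin_r]).
  specialize (K1 a Ha2). specialize (K2 a Ha3).
  apply Rabs_def2 in Ha1. apply Rabs_def2 in K1. apply Rabs_def2 in K2.
  destruct (IVT (fun s => gg N u a s) (f a0 - e) (f a0 + e)) as [w [Jw Yw]].
  - apply gg_cont_t; auto.
  - lra.
  - lra.
  - lra.
  - assert (w = f a) by (apply (gg_uniq N u a); auto; try apply Sf; lra).
    apply Rabs_def1; lra.
Qed.

Lemma IVT_unit N (S : R -> pt) c : is_norm N -> ccont S -> S 0 = c -> S PI = vscale (-1) c ->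
  N c >= 1 -> exists a, N (vsub (S a) c) = 1.
Proof.
  intros H C S0 SP Nc. assert (PIpos := PI_RGT_0).
  destruct (IVT (fun a => N (vsub (S a) c) - 1) 0 PI) as [a [Ja Ya]].
  - intro t. apply continuity_pt_minus.
    apply (ccont_N N (fun a => vsub (S a) c) H). apply ccont_sub; auto. apply ccont_const.
    apply continuity_pt_const; intros ? ?; auto.
  - lra.
  - rewrite S0, (N_ext N _ (0,0)), N_zero by (auto; veqr). lra.
  - rewrite SP, (N_ext N _ (vscale (-2) c)) by veqr. rewrite N_scale by auto.
    rewrite Rabs_left by lra. lra.
  - exists a. lra.
Qed.

Lemma noncollapse N phi : is_norm N -> URTC N ->
  (forall x y : pt, N (vsub x y) = 1 -> N (vsub (phi x) (phi y)) = 1) ->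
  forall x u v, N u = 1 -> N v = 1 -> N (vsub u v) = 1 ->
  phi (vadd x (vadd u v)) <> phi x.
Proof.
  intros H U Hphi x u v Hu Hv Huv Ecol.
  assert (PIpos := PI_RGT_0).
  assert (Hu0 : u <> (0,0)) by (apply unit_nz with N; auto).
  destruct (apex_fun N u H U Hu0) as [f [Sf Cf]].
  set (p := pth N u).
  assert (Np : forall t, N (p t) = 1) by (intro; apply N_pth; auto).
  assert (Cp : ccont p) by (apply ccont_pth; auto).
  assert (Cpf : ccont (fun a => p (f a))) by (apply ccont_comp; auto).
  assert (Gz : forall a, N (vsub (p a) (p (f a))) = 1).
  { intro a. destruct (Sf a) as [_ Y]. unfold gg in Y. fold p in Y. lra. }
  assert (P0 : p 0 = u) by (apply pth0; auto).
  assert (PPI : forall t, p (t + PI) = vscale (-1) (p t)) by (intro; apply pth_PI; auto).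
  assert (fPI : f PI = f 0 + PI).
  { apply (gg_uniq N u PI); auto.
    - apply Sf.
    - destruct (Sf 0); lra.
    - apply Sf.
    - unfold gg. fold p. replace PI with (0 + PI) at 1 by ring. rewrite !PPI.
      rewrite (N_ext N _ (vscale (-1) (vsub (p 0) (p (f 0))))) by veqr.
      rewrite N_opp, Gz by auto. ring. }
  assert (pfPI : p (f PI) = vscale (-1) (p (f 0))) by (rewrite fPI; apply PPI).
  assert (pPI : p PI = vscale (-1) u) by (replace PI with (0 + PI) by ring; rewrite PPI, P0; auto).
  set (c := vadd u v).
  assert (Nc : N c >= 1).
  { pose proof (N_rev N H (vscale 2 u) (vsub u v)).
    rewrite N_scale, Hu, Huv in H0 by auto. rewrite Rabs_right in H0 by lra.
    rewrite (N_ext N _ c) in H0 by (unfold c; veqr). lra. }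
  assert (Fin : forall e e', N e = 1 -> N e' = 1 -> N (vsub e e') = 1 ->
                 N (vsub (vadd e e') c) = 1 -> False).
  { intros e e' He He' Hee Hd.
    assert (D1 : N (vsub (phi (vadd x (vadd e e'))) (phi x)) = 1).
    { rewrite <- Ecol. apply Hphi. rewrite <- Hd. apply N_ext. unfold c; veqr. }
    destruct (rhombus_image N phi H U Hphi x e e' He He' Hee) as [E|E]; rewrite E in D1.
    - rewrite (N_ext N _ (0,0)), N_zero in D1 by (auto; veqr). lra.
    - set (A := phi (vadd x e)) in *. set (B := phi (vadd x e')) in *. set (P := phi x) in *.
      assert (HA : N (vsub A P) = 1). { apply Hphi. rewrite <- He; apply N_ext; veqr. }
      assert (HB : N (vsub B P) = 1). { apply Hphi. rewrite <- He'; apply N_ext; veqr. }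
      assert (HAB : N (vsub (vsub A P) (vsub B P)) = 1).
      { assert (HAB0 : N (vsub A B) = 1) by (apply Hphi; rewrite <- Hee; apply N_ext; veqr).
        rewrite <- HAB0; apply N_ext; veqr. }
      apply (N_unit_diag N H U (vsub A P) (vsub B P)); auto.
      rewrite <- D1. apply N_ext. veqr. }
  assert (Ha : apex N (0,0) u (p (f 0))).
  { split. rewrite N_sym, (N_ext N _ (p (f 0))) by (auto; veqr). apply Np.
    rewrite <- P0. apply Gz. }
  assert (Hab : N (vsub (0,0) u) = 1) by (rewrite N_sym, (N_ext N _ u) by (auto; veqr); auto).
  assert (A1 : apex N (0,0) u v).
  { split. rewrite N_sym by auto. rewrite <- Hv; apply N_ext; veqr. auto. }
  assert (A2 : apex N (0,0) u (vsub u v)).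
  { split. rewrite N_sym by auto. rewrite <- Huv; apply N_ext; veqr. rewrite <- Hv; apply N_ext; veqr. }
  assert (D12 : v <> vsub u v).
  { intro E. assert (u = vscale 2 v).
    { pose proof (f_equal fst E); pose proof (f_equal snd E).
      unfold vsub, vscale in *; simpl in *. apply injective_projections; simpl; lra. }
    rewrite H0, N_scale, Hv in Hu by auto. rewrite Rabs_right in Hu; lra. }
  destruct (apex_two N U _ _ _ _ _ Hab A1 A2 D12 Ha) as [E|E].
  -
    destruct (IVT_unit N (fun a => vadd (p a) (p (f a))) c H) as [a Ha'].
    + apply ccont_add; auto.
    + rewrite P0, E. reflexivity.
    + rewrite pPI, pfPI, E. unfold c; veqr.
    + auto.
    + apply (Fin (p a) (p (f a))); auto.
  -
    destruct (IVT_unit N (fun a => vsub (vscale 2 (p a)) (p (f a))) c H) as [a Ha'].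
    + apply ccont_sub; auto. apply ccont_scale; auto.
    + rewrite P0, E. unfold c; veqr.
    + rewrite pPI, pfPI, E. unfold c; veqr.
    + auto.
    + apply (Fin (p a) (vsub (p a) (p (f a))));
      first [apply Np | apply Gz | (rewrite (N_ext N _ (p (f a))) by veqr; apply Np)
            | (rewrite <- Ha'; apply N_ext; veqr)].
Qed.

Lemma nat_above r : exists k : nat, r <= INR k.
Proof.
  destruct (archimed r) as [H1 H2].
  destruct (Z.lt_ge_cases 0 (up r)) as [L|L].
  - exists (Z.to_nat (up r)). rewrite INR_IZR_INZ, Z2Nat.id by lia. lra.
  - exists 0%nat. simpl. assert (up r <= 0)%Z by lia. apply IZR_le in H. lra.
Qed.

Lemma par N phi : is_norm N -> URTC N ->
  (forall x y : pt, N (vsub x y) = 1 -> N (vsub (phi x) (phi y)) = 1) ->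
  forall q u v, N u = 1 -> N v = 1 -> N (vsub u v) = 1 ->
  phi (vadd q (vadd u v)) = vsub (vadd (phi (vadd q u)) (phi (vadd q v))) (phi q).
Proof.
  intros H U Hphi q u v Hu Hv Huv.
  destruct (rhombus_image N phi H U Hphi q u v Hu Hv Huv) as [E|E]; auto.
  exfalso; apply (noncollapse N phi H U Hphi q u v); auto.
Qed.

Definition T (phi : pt -> pt) (w q : pt) := vsub (phi (vadd q w)) (phi q).

Lemma apex_exists N u : is_norm N -> URTC N -> N u = 1 -> exists v, N v = 1 /\ N (vsub u v) = 1.
Proof.
  intros H U Hu. assert (Hab : N (vsub (0,0) u) = 1) by (rewrite N_sym, (N_ext N _ u) by (auto; veqr); auto).
  destruct (U _ _ Hab) as [x1 [x2 [_ Hs]]].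
  destruct (proj2 (Hs x1) (or_introl eq_refl)) as [A B].
  exists x1; split; auto. rewrite N_sym, (N_ext N _ x1) in A by (auto; veqr). auto.
Qed.

Lemma T_shift N phi : is_norm N -> URTC N ->
  (forall x y : pt, N (vsub x y) = 1 -> N (vsub (phi x) (phi y)) = 1) ->
  forall u q, N u = 1 -> T phi u (vadd q u) = T phi u q.
Proof.
  intros H U Hphi u q Hu.
  destruct (apex_exists N u H U Hu) as [v [Hv Huv]].
  assert (Pr : forall q w, N w = 1 -> N (vsub u w) = 1 -> T phi u (vadd q w) = T phi u q).
  { intros q0 w Hw Huw. unfold T.
    replace (vadd (vadd q0 w) u) with (vadd q0 (vadd u w)) by veqr.
    rewrite (par N phi H U Hphi q0 u w) by auto. veqr. }
  replace (vadd q u) with (vadd (vadd q v) (vsub u v)) by veqr.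
  rewrite Pr by (auto; rewrite (N_ext N _ v) by veqr; auto).
  apply Pr; auto.
Qed.

Lemma T_line N phi : is_norm N -> URTC N ->
  (forall x y : pt, N (vsub x y) = 1 -> N (vsub (phi x) (phi y)) = 1) ->
  forall u q (n : nat), N u = 1 ->
  T phi u (vadd q (vscale (INR n) u)) = T phi u q /\
  phi (vadd q (vscale (INR n) u)) = vadd (phi q) (vscale (INR n) (T phi u q)).
Proof.
  intros H U Hphi u q n Hu. induction n as [|n [IH1 IH2]].
  - simpl. replace (vadd q (vscale 0 u)) with q by veqr. split; auto. veqr.
  - rewrite S_INR.
    assert (E : vadd q (vscale (INR n + 1) u) = vadd (vadd q (vscale (INR n) u)) u) by veqr.
    rewrite E. split.
    + rewrite (T_shift N); auto.
    + assert (phi (vadd (vadd q (vscale (INR n) u)) u) =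
              vadd (phi (vadd q (vscale (INR n) u))) (T phi u (vadd q (vscale (INR n) u)))).
      { unfold T; veqr. }
      rewrite H0, IH1, IH2. veqr.
Qed.

Lemma S2 N z : is_norm N -> N z <= 2 -> exists e, N e = 1 /\ N (vsub z e) = 1.
Proof.
  intros H Hz. assert (PIpos := PI_RGT_0).
  destruct (classic (z = (0,0))) as [Ez|Ez].
  - assert (Hn : (1,0) <> (0,0) :> pt) by (intro E; injection E; lra).
    exists (pth N (1,0) 0). split. apply N_pth; auto.
    rewrite Ez, N_sym, (N_ext N _ (pth N (1,0) 0)) by (auto; veqr). apply N_pth; auto.
  - pose proof (N_rot_pos N z 0 H Ez) as Pz. rewrite rot0 in Pz.
    assert (h0 : N (vsub z (pth N z 0)) <= 1).
    { unfold pth. rewrite rot0. rewrite (N_ext N _ (vscale (1 - / N z) z)) by veqr.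
      rewrite N_scale by auto.
      replace (Rabs (1 - / N z) * N z) with (Rabs (N z - 1)).
      apply Rabs_le; lra.
      replace (N z - 1) with ((1 - / N z) * N z) by (field; lra).
      rewrite Rabs_mult, (Rabs_right (N z)) by lra. auto. }
    assert (hPI : N (vsub z (pth N z PI)) > 1).
    { replace PI with (0 + PI) by ring. rewrite pth_PI by auto. unfold pth. rewrite rot0.
      rewrite (N_ext N _ (vscale (1 + / N z) z)) by veqr.
      rewrite N_scale by auto. rewrite Rabs_right.
      replace ((1 + / N z) * N z) with (N z + 1) by (field; lra). lra.
      assert (/ N z > 0) by (apply Rinv_0_lt_compat; lra). lra. }
    destruct (Req_dec (N (vsub z (pth N z 0))) 1) as [E1|E1].
    + exists (pth N z 0). split; auto. apply N_pth; auto.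
    + destruct (IVT (fun t => N (vsub z (pth N z t)) - 1) 0 PI) as [t [Jt Yt]].
      * intro t. apply continuity_pt_minus.
        apply (ccont_N N (fun t => vsub z (pth N z t)) H). apply ccont_sub. apply ccont_const.
        apply ccont_pth; auto. apply continuity_pt_const; intros ? ?; auto.
      * lra.
      * lra.
      * lra.
      * exists (pth N z t). split. apply N_pth; auto. lra.
Qed.

Lemma step2 N phi : is_norm N ->
  (forall x y : pt, N (vsub x y) = 1 -> N (vsub (phi x) (phi y)) = 1) ->
  forall a b, N (vsub a b) <= 2 -> N (vsub (phi a) (phi b)) <= 2.
Proof.
  intros H Hphi a b Hab. destruct (S2 N (vsub a b) H Hab) as [e [He Hd]].
  set (m := vadd b e).
  assert (N (vsub (phi a) (phi m)) = 1).
  { apply Hphi. rewrite <- Hd. apply N_ext. unfold m; veqr. }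
  assert (N (vsub (phi m) (phi b)) = 1).
  { apply Hphi. rewrite <- He. apply N_ext. unfold m; veqr. }
  pose proof (N_tri3 N H (phi a) (phi m) (phi b)). lra.
Qed.

Lemma coarse N phi : is_norm N ->
  (forall x y : pt, N (vsub x y) = 1 -> N (vsub (phi x) (phi y)) = 1) ->
  forall k : nat, forall a b, N (vsub a b) <= 2 * INR k -> N (vsub (phi a) (phi b)) <= 2 * INR k.
Proof.
  intros H Hphi k. induction k as [|k IH]; intros a b Hab.
  - simpl in *. assert (N (vsub a b) = 0) by (pose proof (N_ge0 N H (vsub a b)); lra).
    apply vsub_zero in H0; auto. subst. rewrite (N_ext N _ (0,0)), N_zero by (auto; veqr). lra.
  - rewrite S_INR in *. pose proof (pos_INR k).
    set (r := INR k / (INR k + 1)).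
    set (z := vadd b (vscale r (vsub a b))).
    assert (E1 : N (vsub a z) = N (vsub a b) / (INR k + 1)).
    { rewrite (N_ext N _ (vscale (1 - r) (vsub a b))) by (unfold z; veqr).
      rewrite N_scale by auto. replace (1 - r) with (/ (INR k + 1)) by (unfold r; field; lra).
      rewrite Rabs_right. unfold Rdiv; ring. left; apply Rinv_0_lt_compat; lra. }
    assert (E2 : N (vsub z b) = r * N (vsub a b)).
    { rewrite (N_ext N _ (vscale r (vsub a b))) by (unfold z; veqr).
      rewrite N_scale by auto. rewrite Rabs_right; auto.
      apply Rle_ge; unfold r, Rdiv; apply Rmult_le_pos; [lra| left; apply Rinv_0_lt_compat; lra]. }
    assert (B1 : N (vsub a z) <= 2).
    { rewrite E1. apply (Rmult_le_reg_r (INR k + 1)); [lra|]. unfold Rdiv.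
      rewrite Rmult_assoc, Rinv_l by lra. lra. }
    assert (B2 : N (vsub z b) <= 2 * INR k).
    { rewrite E2. unfold r. replace (2 * INR k) with (INR k / (INR k + 1) * (2 * (INR k + 1))) by (field; lra).
      apply Rmult_le_compat_l; [|lra]. unfold Rdiv; apply Rmult_le_pos; [lra| left; apply Rinv_0_lt_compat; lra]. }
    pose proof (IH z b B2). pose proof (step2 N phi H Hphi a z B1).
    pose proof (N_tri3 N H (phi a) (phi z) (phi b)). lra.
Qed.

Lemma T_indep N phi : is_norm N -> URTC N ->
  (forall x y : pt, N (vsub x y) = 1 -> N (vsub (phi x) (phi y)) = 1) ->
  forall w q q', N w = 1 -> T phi w q' = T phi w q.
Proof.
  intros H U Hphi w q q' Hw.
  destruct (nat_above (N (vsub q' q) / 2)) as [K HK].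
  set (D := vsub (T phi w q') (T phi w q)).
  assert (Bn : forall n : nat, INR n * N D <= 2 * INR K + N (vsub (phi q') (phi q))).
  { intro n.
    destruct (T_line N phi H U Hphi w q n Hw) as [_ L1].
    destruct (T_line N phi H U Hphi w q' n Hw) as [_ L2].
    assert (C : N (vsub (phi (vadd q' (vscale (INR n) w))) (phi (vadd q (vscale (INR n) w)))) <= 2 * INR K).
    { apply (coarse N phi H Hphi). rewrite (N_ext N _ (vsub q' q)) by veqr. lra. }
    rewrite L1, L2 in C.
    pose proof (N_rev N H (vscale (INR n) D) (vscale (-1) (vsub (phi q') (phi q)))).
    rewrite N_scale, N_opp in H0 by auto. rewrite Rabs_right in H0 by (apply Rle_ge, pos_INR).
    rewrite (N_ext N (vsub (vscale (INR n) D) _) (vsub (vadd (phi q') (vscale (INR n) (T phi w q'))) (vadd (phi q) (vscale (INR n) (T phi w q))))) in H0 by (unfold D; veqr).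
    lra. }
  assert (N D = 0).
  { pose proof (N_ge0 N H D). destruct (Req_dec (N D) 0); auto. exfalso.
    destruct (nat_above ((2 * INR K + N (vsub (phi q') (phi q)) + 1) / N D)) as [n Hn].
    specialize (Bn n).
    assert (INR n * N D >= (2 * INR K + N (vsub (phi q') (phi q)) + 1)).
    { apply Rle_ge. apply (Rmult_le_reg_r (/ N D)). apply Rinv_0_lt_compat; lra.
      rewrite Rmult_assoc, Rinv_r by lra. lra. }
    lra. }
  apply vsub_zero in H0; auto.
Qed.

Definition M (phi : pt -> pt) z := vsub (phi z) (phi (0,0)).

Lemma M_unit N phi : is_norm N -> URTC N ->
  (forall x y : pt, N (vsub x y) = 1 -> N (vsub (phi x) (phi y)) = 1) ->
  forall y w, N w = 1 -> M phi (vadd y w) = vadd (M phi y) (M phi w).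
Proof.
  intros H U Hphi y w Hw.
  pose proof (T_indep N phi H U Hphi w (0,0) y Hw). unfold T in H0.
  replace (vadd (0,0) w) with w in H0 by veqr.
  unfold M.
  apply injective_projections; pose proof (f_equal fst H0); pose proof (f_equal snd H0);
  unfold vsub, vadd in *; simpl in *; lra.
Qed.

Lemma M_zero phi : M phi (0,0) = (0,0).
Proof. unfold M. veqr. Qed.

Lemma M_add_k N phi : is_norm N -> URTC N ->
  (forall x y : pt, N (vsub x y) = 1 -> N (vsub (phi x) (phi y)) = 1) ->
  forall k : nat, forall z, N z <= 2 * INR k -> forall y, M phi (vadd y z) = vadd (M phi y) (M phi z).
Proof.
  intros H U Hphi k. induction k as [|k IH]; intros z Hz y.
  - simpl in Hz. assert (N z = 0) by (pose proof (N_ge0 N H z); lra).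
    apply N_def in H0; auto. subst z. rewrite M_zero. replace (vadd y (0,0)) with y by veqr. veqr.
  - rewrite S_INR in Hz. pose proof (pos_INR k).
    set (r := INR k / (INR k + 1)).
    set (z' := vscale r z). set (d := vsub z z').
    assert (Hr : 0 <= r) by (unfold r, Rdiv; apply Rmult_le_pos; [lra| left; apply Rinv_0_lt_compat; lra]).
    assert (Hz' : N z' <= 2 * INR k).
    { unfold z'. rewrite N_scale by auto. rewrite Rabs_right by lra. unfold r.
      replace (2 * INR k) with (INR k / (INR k + 1) * (2 * (INR k + 1))) by (field; lra).
      apply Rmult_le_compat_l; [exact Hr|lra]. }
    assert (Hd : N d <= 2).
    { unfold d, z'. rewrite (N_ext N _ (vscale (/ (INR k + 1)) z)) by (unfold r; veq; lra).
      rewrite N_scale by auto. rewrite Rabs_right by (left; apply Rinv_0_lt_compat; lra).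
      apply (Rmult_le_reg_l (INR k + 1)); [lra|]. rewrite <- Rmult_assoc, Rinv_r by lra. lra. }
    destruct (S2 N d H Hd) as [e [He Hde]].
    assert (Ez : forall y0, vadd y0 z = vadd (vadd (vadd y0 z') e) (vsub d e)) by (intro; unfold d; veqr).
    assert (G : forall y0, M phi (vadd y0 z) = vadd (vadd (M phi (vadd y0 z')) (M phi e)) (M phi (vsub d e))).
    { intro y0. rewrite Ez. rewrite (M_unit N phi H U Hphi _ (vsub d e)) by auto.
      rewrite (M_unit N phi H U Hphi _ e) by auto. reflexivity. }
    rewrite G. rewrite (IH z' Hz' y).
    assert (Mz : M phi z = M phi (vadd (0,0) z)) by (f_equal; veqr). rewrite Mz, G.
    rewrite (IH z' Hz' (0,0)). rewrite M_zero. veqr.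
Qed.

Lemma M_add N phi : is_norm N -> URTC N ->
  (forall x y : pt, N (vsub x y) = 1 -> N (vsub (phi x) (phi y)) = 1) ->
  forall y z, M phi (vadd y z) = vadd (M phi y) (M phi z).
Proof.
  intros H U Hphi y z. destruct (nat_above (N z / 2)) as [k Hk].
  apply (M_add_k N phi H U Hphi k). lra.
Qed.

Lemma int_cases (m : Z) : exists n : nat, IZR m = INR n \/ IZR m = - INR n.
Proof.
  exists (Z.abs_nat m). rewrite INR_IZR_INZ, Zabs2Nat.id_abs.
  destruct (Z.le_gt_cases 0 m).
  - left. rewrite Z.abs_eq; auto.
  - right. rewrite Z.abs_neq by lia. rewrite opp_IZR. ring.
Qed.

Lemma floor_ex (x : R) : exists m : Z, IZR m <= x < IZR m + 1.
Proof. destruct (archimed x) as [A B]. exists (up x - 1)%Z. rewrite minus_IZR. simpl. lra. Qed.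

Theorem lin_iso N phi : is_norm N -> URTC N ->
  (forall x y : pt, N (vsub x y) = 1 -> N (vsub (phi x) (phi y)) = 1) ->
  forall t z, M phi (vscale t z) = vscale t (M phi z).
Proof.
  intros H U Hphi t z.
  pose proof (M_add N phi H U Hphi) as Ad.
  assert (Mnat : forall n : nat, M phi (vscale (INR n) z) = vscale (INR n) (M phi z)).
  { induction n as [|n IH].
    - simpl. replace (vscale 0 z) with (0,0) by veqr. rewrite M_zero. veqr.
    - rewrite S_INR. replace (vscale (INR n + 1) z) with (vadd (vscale (INR n) z) z) by veqr.
      rewrite Ad, IH. veqr. }
  assert (Mopp : forall x, M phi (vscale (-1) x) = vscale (-1) (M phi x)).
  { intro x. pose proof (Ad x (vscale (-1) x)). replace (vadd x (vscale (-1) x)) with (0,0) in H0 by veqr.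
    rewrite M_zero in H0. apply injective_projections; pose proof (f_equal fst H0); pose proof (f_equal snd H0);
    unfold vadd, vscale in *; simpl in *; lra. }
  assert (Mint : forall m : Z, M phi (vscale (IZR m) z) = vscale (IZR m) (M phi z)).
  { intro m. destruct (int_cases m) as [n [E|E]]; rewrite E.
    - apply Mnat.
    - replace (vscale (- INR n) z) with (vscale (-1) (vscale (INR n) z)) by veqr.
      rewrite Mopp, Mnat. veqr. }
  set (D := fun s => vsub (M phi (vscale s z)) (vscale s (M phi z))).
  assert (Dadd : forall a b, D (a + b) = vadd (D a) (D b)).
  { intros a b. unfold D. replace (vscale (a + b) z) with (vadd (vscale a z) (vscale b z)) by veqr.
    rewrite Ad. veqr. }
  assert (Dint : forall m : Z, D (IZR m) = (0,0)).
  { intro m. unfold D. rewrite Mint. veqr. }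
  assert (Dnat : forall n : nat, D (INR n * t) = vscale (INR n) (D t)).
  { induction n as [|n IH].
    - simpl. rewrite Rmult_0_l. unfold D. replace (vscale 0 z) with (0,0) by veqr. rewrite M_zero. veqr.
    - rewrite S_INR. replace ((INR n + 1) * t) with (INR n * t + t) by ring. rewrite Dadd, IH. veqr. }
  destruct (nat_above (N z / 2)) as [K HK].
  set (B := 2 * INR K + N (M phi z)).
  assert (Dbd : forall s, 0 <= s < 1 -> N (D s) <= B).
  { intros s Hs. unfold D.
    assert (C : N (M phi (vscale s z)) <= 2 * INR K).
    { unfold M. apply (coarse N phi H Hphi).
      rewrite (N_ext N _ (vscale s z)) by veqr. rewrite N_scale by auto.
      rewrite Rabs_right by lra. pose proof (N_ge0 N H z). nra. }
    pose proof (N_tri3 N H (M phi (vscale s z)) (0,0) (vscale s (M phi z))).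
    rewrite (N_ext N (vsub _ (0,0)) (M phi (vscale s z))) in H0 by veqr.
    rewrite (N_ext N (vsub (0,0) _) (vscale (-s) (M phi z))) in H0 by veqr.
    rewrite N_scale in H0 by auto. rewrite Rabs_left1 in H0 by lra.
    pose proof (N_ge0 N H (M phi z)). unfold B. nra. }
  assert (Bn : forall n : nat, INR n * N (D t) <= B).
  { intro n. destruct (floor_ex (INR n * t)) as [m Hm].
    replace (INR n * N (D t)) with (N (D (INR n * t))).
    - replace (INR n * t) with (IZR m + (INR n * t - IZR m)) by ring.
      rewrite Dadd, Dint. replace (vadd (0,0) (D (INR n * t - IZR m))) with (D (INR n * t - IZR m)) by veqr.
      apply Dbd. lra.
    - rewrite Dnat, N_scale by auto. rewrite Rabs_right; auto. apply Rle_ge, pos_INR. }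
  assert (N (D t) = 0).
  { pose proof (N_ge0 N H (D t)). destruct (Req_dec (N (D t)) 0); auto. exfalso.
    destruct (nat_above ((B + 1) / N (D t))) as [n Hn].
    specialize (Bn n).
    assert (INR n * N (D t) >= B + 1).
    { apply Rle_ge. apply (Rmult_le_reg_r (/ N (D t))). apply Rinv_0_lt_compat; lra.
      rewrite Rmult_assoc, Rinv_r by lra. lra. }
    lra. }
  apply vsub_zero in H0; auto.
Qed.

Theorem theorem1 (N : pt -> R) (phi : pt -> pt) :
  is_norm N -> URTC N ->
  (forall x y : pt, N (vsub x y) = 1 -> N (vsub (phi x) (phi y)) = 1) ->
  affine_isometry N phi.
Proof.
  intros H U Hphi.
  pose proof (M_add N phi H U Hphi) as Ad.
  pose proof (lin_iso N phi H U Hphi) as Sc.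
  assert (Mlin : forall x, M phi x = lin_app (fst (M phi (1,0))) (fst (M phi (0,1)))
                                            (snd (M phi (1,0))) (snd (M phi (0,1))) x).
  { intro x. replace x with (vadd (vscale (fst x) (1,0)) (vscale (snd x) (0,1))) at 1 by veqr.
    rewrite Ad, !Sc. veqr. }
  split.
  - exists (fst (M phi (1,0))), (fst (M phi (0,1))), (snd (M phi (1,0))), (snd (M phi (0,1))), (phi (0,0)).
    intro x. rewrite <- Mlin. unfold M. veqr.
  - intros x y.
    assert (E : vsub (phi x) (phi y) = M phi (vsub x y)).
    { replace (vsub (phi x) (phi y)) with (vsub (M phi x) (M phi y)) by (unfold M; veqr).
      replace x with (vadd y (vsub x y)) at 1 by veqr. rewrite Ad. veqr. }
    rewrite E. set (z := vsub x y). clearbody z.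
    destruct (classic (z = (0,0))) as [Ez|Ez].
    + subst z. rewrite M_zero. auto.
    + pose proof (N_ge0 N H z).
      assert (Nz : N z <> 0) by (intro E0; apply N_def in E0; auto).
      set (w := vscale (/ N z) z).
      assert (Hw : N w = 1).
      { unfold w. rewrite N_scale by auto. rewrite Rabs_right. field; auto.
        left; apply Rinv_0_lt_compat; lra. }
      assert (HMw : N (M phi w) = 1).
      { unfold M. apply Hphi. rewrite <- Hw. apply N_ext. veqr. }
      replace z with (vscale (N z) w) at 1 by (unfold w; veq; auto).
      rewrite Sc, N_scale, HMw by auto. rewrite Rabs_right by lra. ring.
Qed.
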